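(* Let $r \ge 2$ be such that $p_{r+1}^2 \ge p_r\#/2$. Then $$\max\{\,p_{r+1}-1,\ d(p_{r+1}^2)\,\} = 2p_{r-1}.$$
   Context: $p_k$ denotes the $k$-th prime ($p_1=2$, $p_2=3$, \dots). For a prime $p$, $p\# = \prod_{q\le p,\ q \text{ prime}} q$. For $r \ge 1$, $d(p_{r+1}^2)$ denotes the maximum of $q'-q$ over all pairs of consecutive primes $q<q'$ with $p_{r+1} \le q < q' \le p_{r+1}^2$ (equivalently, the maximum gap between consecutive integers coprime to $p_r\#$ lying in the interval $[p_{r+1}, p_{r+1}^2]$). *)

(* Defs.v *)
From mathcomp Require Import all_boot.
Set Implicit Arguments. Unset Strict Implicit. Unset Printing Implicit Defensive.

Lemma exists_prime_gt (n : nat) : exists p, (n < p) && prime p.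
Proof. by case: (prime_above n) => p H1 H2; exists p; rewrite H1 H2. Qed.

Definition nextp (n : nat) : nat := ex_minn (exists_prime_gt n).

(* pk k = p_k, the k-th prime (p_1 = 2, p_2 = 3, ...); pk 0 = 0 is a dummy. *)
Fixpoint pk (k : nat) : nat :=
  match k with
  | 0 => 0
  | k'.+1 => nextp (pk k')
  end.

Definition primorial (p : nat) : nat := \prod_(q < p.+1 | prime q) q.

(* maxgap L N = max of q' - q over consecutive primes q < q' with
   L <= q < q' <= N (0 if there is no such pair).  For a prime q the next
   consecutive prime is exactly nextp q. *)
Definition maxgap (L N : nat) : nat :=
  \max_(L <= q < N.+1 | prime q && (nextp q <= N)) (nextp q - q).

Definition dgap (r : nat) : nat := maxgap (pk r.+1) (pk r.+1 ^ 2).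

(* Main.v *)
Require Import Defs.
From mathcomp Require Import all_boot.
From mathcomp Require Import zify.

Lemma nextpP n : [/\ n < nextp n, prime (nextp n) & forall m, n < m -> prime m -> nextp n <= m].
Proof.
rewrite /nextp; case: ex_minnP => p /andP[H1 H2] H3; split => // m Hm Pm.
by apply: H3; rewrite Hm Pm.
Qed.

Definition nextc n := n.+1 + find (fun i => prime (n.+1 + i)) (iota 0 n.+2).

Lemma nextcE n : prime (nextc n) -> nextp n = nextc n.
Proof.
move=> Pc; have [H1 H2 H3] := nextpP n.
apply/eqP; rewrite eqn_leq H3 ?andbT //; last by rewrite /nextc; lia.
rewrite leqNgt; apply/negP => Hlt.
have Hj : nextp n - n.+1 < find (fun i => prime (n.+1 + i)) (iota 0 n.+2).
  by move: Hlt; rewrite /nextc; lia.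
have := before_find 0 Hj.
have Hs : nextp n - n.+1 < n.+2.
  apply: (leq_trans Hj); apply: leq_trans (find_size _ _) _; by rewrite size_iota.
rewrite nth_iota // add0n subnKC // H2 //.
Qed.

Lemma nextp_small n : n <= 130 -> nextp n = nextc n.
Proof.
move=> Hn; apply: nextcE.
have : all (fun n => prime (nextc n)) (iota 0 131) by vm_compute.
by move/allP; apply; rewrite mem_iota.
Qed.

Lemma pkS k : pk k.+1 = nextp (pk k). Proof. by []. Qed.

Lemma pk_small : pk 1 = 2 /\ pk 2 = 3 /\ pk 3 = 5 /\ pk 4 = 7 /\ pk 5 = 11 /\
   pk 6 = 13 /\ pk 7 = 17 /\ pk 8 = 19 /\ pk 9 = 23 /\ pk 10 = 29 /\ pk 11 = 31.
Proof.
have e1 : pk 1 = 2 by rewrite pkS /= nextp_small.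
have e2 : pk 2 = 3 by rewrite pkS e1 nextp_small.
have e3 : pk 3 = 5 by rewrite pkS e2 nextp_small.
have e4 : pk 4 = 7 by rewrite pkS e3 nextp_small.
have e5 : pk 5 = 11 by rewrite pkS e4 nextp_small.
have e6 : pk 6 = 13 by rewrite pkS e5 nextp_small.
have e7 : pk 7 = 17 by rewrite pkS e6 nextp_small.
have e8 : pk 8 = 19 by rewrite pkS e7 nextp_small.
have e9 : pk 9 = 23 by rewrite pkS e8 nextp_small.
have e10 : pk 10 = 29 by rewrite pkS e9 nextp_small.
have e11 : pk 11 = 31 by rewrite pkS e10 nextp_small.
by [].
Qed.

Lemma maxgap_small L N : N <= 130 -> maxgap L N =
  \max_(L <= q < N.+1 | prime q && (nextc q <= N)) (nextc q - q).
Proof.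
move=> HN; rewrite /maxgap big_nat_cond [RHS]big_nat_cond.
apply: eq_big => [i|i /andP[/andP[_ Hi] _]].
  case Hi: (L <= i < N.+1) => //=.
  by rewrite nextp_small //; move: Hi; lia.
by rewrite nextp_small //; move: Hi; lia.
Qed.

Lemma test : maxgap 11 121 = 8.
Proof. by rewrite maxgap_small // unlock; vm_compute. Qed.

Lemma pk_ltS k : pk k < pk k.+1.
Proof. by have [] := nextpP (pk k). Qed.

Lemma pk_prime k : prime (pk k.+1).
Proof. by have [] := nextpP (pk k). Qed.

Lemma pk_ltn i j : i < j -> pk i < pk j.
Proof. apply: (@homo_ltn _ pk (fun a b => a < b)) => //; [exact: ltn_trans | exact: pk_ltS]. Qed.

Lemma pk_leq i j : (pk i <= pk j) = (i <= j).
Proof. by apply: leq_mono => x y; exact: pk_ltn. Qed.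

Lemma pk_min k s : prime s -> pk k < s -> pk k.+1 <= s.
Proof. by move=> Ps Hs; have [_ _ H] := nextpP (pk k); exact: H. Qed.

Lemma pk_ge k : k <= pk k.
Proof. by elim: k => // k IH; apply: leq_ltn_trans IH (pk_ltS k). Qed.

Lemma prime_pk s : prime s -> exists j, pk j = s.
Proof.
move=> Ps.
suff H : forall j, s <= pk j -> exists i, pk i = s by apply: (H s); exact: pk_ge.
elim=> [|j IH] Hs; first by move: Ps; rewrite leqn0 in Hs; rewrite (eqP Hs).
case: (leqP s (pk j)) => [/IH //|Hlt].
exists j.+1; apply/eqP; rewrite eqn_leq Hs andbT; exact: pk_min.
Qed.

Definition J s := find (fun j => pk j == s) (iota 0 s.+1).

Lemma pkJ s : prime s -> pk (J s) = s.
Proof.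
move=> /prime_pk [j Hj].
have Hh : has (fun j => pk j == s) (iota 0 s.+1).
  apply/hasP; exists j; last by rewrite Hj.
  rewrite mem_iota /= add0n ltnS -Hj; exact: pk_ge.
have := nth_find 0 Hh; rewrite nth_iota ?add0n => [/eqP //|].
by move: Hh; rewrite has_find size_iota.
Qed.

Lemma primorialE p : primorial p = \prod_(0 <= q < p.+1) (if prime q then q else 1).
Proof. by rewrite /primorial big_mkcond big_mkord. Qed.

Lemma primorial_pk0 : primorial (pk 0) = 1.
Proof. by rewrite primorialE big_nat1. Qed.

Lemma primorialS k : primorial (pk k.+1) = primorial (pk k) * pk k.+1.
Proof.
rewrite !primorialE (big_cat_nat _ (n := (pk k).+1)) //; last first.
  by rewrite ltnS ltnW // pk_ltS.
rewrite (@big_nat_recr _ _ _ (pk k.+1)); last exact: pk_ltS.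
have -> : \prod_((pk k).+1 <= i < pk k.+1) (if prime i then i else 1) = 1.
  rewrite big1_seq // => i; rewrite mem_index_iota => /andP[_ /andP[H1 H2]].
  case Pi: (prime i) => //.
  by have := pk_min k i Pi H1; rewrite leqNgt H2.
by rewrite pk_prime /= mul1n.
Qed.

Lemma primorial_gt0 k : 0 < primorial (pk k).
Proof.
elim: k => [|k IH]; first by rewrite primorial_pk0.
by rewrite primorialS muln_gt0 IH prime_gt0 // pk_prime.
Qed.

Lemma primorial_dvd p s : prime s -> s <= p -> s %| primorial p.
Proof.
move=> Ps Hs; rewrite /primorial.
have Hs' : s < p.+1 by [].
by rewrite (bigD1 (Ordinal Hs')) //= dvdn_mulr.
Qed.

Lemma leq_expl m n e : m <= n -> m ^ e <= n ^ e.
Proof. by move=> H; elim: e => // e IH; rewrite !expnS leq_mul. Qed.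

Lemma primorial_le k : primorial (pk k) <= pk k ^ k.
Proof.
elim: k => [|k IH]; first by rewrite primorial_pk0.
rewrite primorialS expnSr leq_mul2r; apply/orP; right.
apply: leq_trans IH _; apply: leq_expl; exact: ltnW (pk_ltS k).
Qed.

Lemma primorial_lower i r : i <= r ->
  primorial (pk i) * pk i.+1 ^ (r - i) <= primorial (pk r).
Proof.
elim: r => [|r IH] Hir.
  by rewrite leqn0 in Hir; rewrite (eqP Hir) subnn muln1.
case: (ltngtP i r.+1) Hir => // [Hlt _|-> _]; last by rewrite subnn muln1.
rewrite primorialS subSn // expnS mulnCA mulnC.
apply: leq_mul; first exact: IH.
by rewrite pk_leq.
Qed.

Lemma pk_odd k : 2 * k + 1 <= pk k.+1.
Proof.
elim: k => [|k IH]; first by rewrite pkS nextp_small.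
have H1 := pk_ltS k.+1.
case: (leqP (pk k.+1).+2 (pk k.+2)) => [H|H]; first by lia.
have E : pk k.+2 = (pk k.+1).+1 by lia.
case: k IH H1 H E => [|k] IH H1 H E.
  by move: E; rewrite pkS nextp_small // pkS nextp_small.
have O1 : odd (pk k.+2).
  by case: (even_prime (pk_prime k.+1)) => // E2; lia.
case: (even_prime (pk_prime k.+2)) => E2; first by lia.
by move: E2; rewrite E /= O1.
Qed.

Lemma primorial_pk2 : primorial (pk 2) = 6.
Proof.
have [e1 [e2 _]] := pk_small.
by rewrite !primorialS primorial_pk0 e1 e2.
Qed.

Lemma bonse_step k : 2 <= k -> pk (k + pk k.+1) <= pk k.+1 * primorial (pk k).
Proof.
move=> Hk.
set m := primorial (pk k); set q := pk k.+1.
have m6 : 6 <= m.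
  have := @primorial_lower 2 k Hk; rewrite primorial_pk2.
  have : 0 < pk 3 ^ (k - 2) by rewrite expn_gt0 prime_gt0 // pk_prime.
  rewrite -/m => Hp H; apply: leq_trans H; by rewrite -{1}(muln1 6) leq_mul2l.
have q0 : pk k < q := pk_ltS k.
rewrite leqNgt; apply/negP => Hlt.
pose g i := pdiv (i.+1 * m - 1).
have Hg i : [/\ prime (g i), g i %| i.+1 * m - 1 & ~~ (g i %| m)].
  have Hm : m <= i.+1 * m by rewrite leq_pmull.
  have H1 : 1 < i.+1 * m - 1 by lia.
  have Pg := pdiv_prime H1.
  split => //; first exact: pdiv_dvd.
  apply/negP => Hd.
  have Hd2 : g i %| i.+1 * m by rewrite dvdn_mull.
  have := dvdn_sub Hd2 (pdiv_dvd (i.+1 * m - 1)).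
  have -> : i.+1 * m - (i.+1 * m - 1) = 1 by lia.
  by rewrite dvdn1 => /eqP E; move: Pg; rewrite -[pdiv _]/(g i) E.
have Hgq i : q <= g i.
  have [P1 _ N1] := Hg i.
  apply: pk_min => //; rewrite ltnNge; apply/negP => Hle.
  by move: N1; rewrite primorial_dvd.
have Hgle i : i < q -> g i < q * m.
  move=> Hi; have Hm : m <= i.+1 * m by rewrite leq_pmull.
  have : g i <= i.+1 * m - 1 by apply: pdiv_leq; lia.
  have : i.+1 * m <= q * m by rewrite leq_mul2r Hi orbT.
  lia.
have Hne i j : i < j < q -> g i = g j -> False.
  move=> /andP[Hij Hjq] E.
  have [Pj Dj Nj] := Hg j; have [_ Di _] := Hg i.
  rewrite E in Di.
  have := dvdn_sub Dj Di.
  have -> : j.+1 * m - 1 - (i.+1 * m - 1) = (j - i) * m.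
    rewrite mulnBl; have : i.+1 * m <= j.+1 * m by rewrite leq_mul2r ltnS ltnW // orbT.
    have : 1 <= i.+1 * m by rewrite muln_gt0; lia.
    lia.
  rewrite Euclid_dvdM // (negbTE Nj) orbF => D.
  have := dvdn_leq _ D; rewrite subn_gt0 Hij => /(_ isT).
  have := Hgq j; lia.
have Hinj : {in iota 0 q &, injective (fun i => J (g i))}.
  move=> i j; rewrite !mem_iota /= !add0n => Hi Hj E.
  have E2 : g i = g j.
    have [Pi _ _] := Hg i; have [Pj _ _] := Hg j.
    by rewrite -(pkJ _ Pi) E pkJ.
  case: (ltngtP i j) => // H.
    by case: (Hne i j) => //; rewrite H Hj.
  by case: (Hne j i) => //; rewrite H Hi.
have Hsub : {subset map (fun i => J (g i)) (iota 0 q) <= iota k.+1 q.-1}.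
  move=> x /mapP[i]; rewrite mem_iota /= add0n => Hi ->.
  have [Pi _ _] := Hg i.
  have Ex := pkJ _ Pi.
  rewrite mem_iota; apply/andP; split.
    rewrite ltnNge -pk_leq Ex -ltnNge; exact: leq_trans q0 (Hgq i).
  have : pk (J (g i)) < pk (k + q) by rewrite Ex; apply: ltn_trans (Hgle i Hi) Hlt.
  rewrite ltnNge pk_leq -ltnNge.
  have : 0 < q by apply: leq_ltn_trans q0.
  lia.
have := uniq_leq_size _ Hsub; rewrite map_inj_in_uniq // iota_uniq size_map !size_iota.
have : 0 < q by apply: leq_ltn_trans q0.
move=> H /(_ isT); lia.
Qed.

Lemma bonse r : 5 <= r -> 2 * pk r.+1 ^ 2 < primorial (pk r).
Proof.
move=> Hr.
have [e1 [e2 [e3 [e4 [e5 [e6 [e7 [e8 [e9 [e10 e11]]]]]]]]]] := pk_small.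
case: (leqP r 10) => Hr10.
  move: Hr Hr10; case: r => [|[|[|[|[|[|[|[|[|[|[|r]]]]]]]]]]] // _ _;
  rewrite !primorialS primorial_pk0 ?e1 ?e2 ?e3 ?e4 ?e5 ?e6 ?e7 ?e8 ?e9 ?e10 ?e11; lia.
pose k := (r - 3)./2.
have Hk : 2 * k + 3 <= r <= 2 * k + 4.
  have := odd_double_half (r - 3); rewrite -/k; case: (odd _) => /=; lia.
have k4 : 4 <= k by lia.
set m := primorial (pk k); set q := pk k.+1.
have Hq := pk_odd k.
have A : pk r.+1 <= q * m.
  have k2 : 2 <= k by lia.
  apply: (leq_trans _ (bonse_step k k2)); rewrite pk_leq -/q; lia.
have H1 := @primorial_lower k.+1 r ltac:(lia).
have H2 : pk k.+2 ^ k.+2 <= pk k.+2 ^ (r - k.+1).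
  by apply: leq_pexp2l; [rewrite prime_gt0 // pk_prime | lia].
have H4 : 3 * (m * q) <= pk k.+2 ^ (r - k.+1).
  apply: leq_trans H2; rewrite expnS; apply: leq_mul.
    by have := pk_odd k.+1; lia.
  rewrite -primorialS; apply: leq_trans (primorial_le k.+1) _.
  apply: leq_expl; exact: ltnW (pk_ltS _).
have B : (m * q) * (3 * (m * q)) <= primorial (pk r).
  apply: leq_trans H1; rewrite primorialS; exact: leq_mul (leqnn _) H4.
have X0 : 0 < m * q by rewrite muln_gt0 primorial_gt0 prime_gt0 // pk_prime.
rewrite mulnC in A.
have A2 : pk r.+1 ^ 2 <= (m * q) * (m * q) by rewrite -mulnn; exact: leq_mul.
apply: leq_ltn_trans (_ : 2 * ((m * q) * (m * q)) < primorial (pk r)).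
  by rewrite leq_mul2l A2 orbT.
apply: leq_trans B; rewrite mulnCA ltn_mul2l X0 /= ltn_mul2r X0.
done.
Qed.

Theorem mainTheorem2 (r : nat) :
  2 <= r ->
  primorial (pk r) <= 2 * (pk r.+1) ^ 2 ->
  maxn (pk r.+1 - 1) (dgap r) = 2 * pk r.-1.
Proof.
move=> H2 Hp.
case: (leqP 5 r) => H5.
  by have := bonse r H5; rewrite ltnNge Hp.
have [e1 [e2 [e3 [e4 [e5 _]]]]] := pk_small.
move: H2 H5 Hp; case: r => [|[|[|[|[|r]]]]] // _ _ _;
rewrite /dgap ?e1 ?e2 ?e3 ?e4 ?e5 maxgap_small // unlock; vm_compute; reflexivity.
Qed.
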